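(* Let $p$ be a prime and $G$ a finite Abelian $p$-group. For each non-cyclic subgroup $G'\le G$ choose a subgroup $L'<G'$ with $G'/L'\cong C_p\times C_p$. For each such $G'$ and each homomorphism $\rho:G'\to C_p$ (trivial or not) put $$\Theta_{G',\rho}=L'\times\rho|_{L'}-\sum_{L'<C'<G',\ [C':L']=p} C'\times\rho|_{C'}+p\,(G'\times\rho)\in B(G\times C_p).$$ Then $K(G,C_p)[\tfrac1p]=\mathbb Z[\tfrac1p]\otimes K(G,C_p)$ is a free $\mathbb Z[\tfrac1p]$-module with basis the elements $\Theta_{G',\rho}$, where $G'$ ranges over the non-cyclic subgroups of $G$ and $\rho$ over all homomorphisms $G'\to C_p$. In particular $\operatorname{rank}K(G,C_p)$ equals the number of such pairs $(G',\rho)$.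
   Context: $B(G\times C_p)$ is the Burnside ring of the Abelian group $G\times C_p$, free Abelian with basis its subgroups. For $K\le G$ and a homomorphism $\rho:K\to C_p$, $K\times\rho=\{(k,\rho(k)):k\in K\}$ is its graph. $B(G,C_p)\subset B(G\times C_p)$ is spanned by all graphs. $f:B(G\times C_p)\to R_{\mathbb Q}(G\times C_p)$ sends a subgroup $S$ to $[\mathbb Q[(G\times C_p)/S]]$, $K(G\times C_p)=\ker f$, and $K(G,C_p)=K(G\times C_p)\cap B(G,C_p)$ is the module of relative Brauer relations. *)

(* Defs.v *)
From HB Require Import structures.
From mathcomp Require Import all_boot all_order all_algebra all_fingroup all_solvable all_field all_character.
Set Implicit Arguments. Unset Strict Implicit. Unset Printing Implicit Defensive.
Import GRing.Theory Num.Theory.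
Local Open Scope ring_scope.

(* Ambient: G : {group gT}, C_p realised as a group C : {group cT} with #|C| = p.
   G x C_p is the group  setX G C  inside the product finGroupType gT * cT.
   An element of the Burnside ring B(G x C_p) is an integer-valued function on
   subsets of gT * cT supported on the subgroups of G x C (coefficient of each
   basis subgroup). *)

Definition burnside (aT : finGroupType) := {ffun {set aT} -> int}.

Definition bsub (aT : finGroupType) (S : {set aT}) : burnside aT :=
  [ffun A => ((A == S) : nat)%:Z].

Definition in_burnside (aT : finGroupType) (X : {set aT}) (x : burnside aT) :=
  forall A, x A != 0 -> group_set A && (A \subset X).

Definition graph (gT cT : finGroupType) (K : {set gT}) (rho : gT -> cT)
  : {set (gT * cT)%type} := [set (k, rho k) | k in K].

Definition is_hom (gT cT : finGroupType) (K : {set gT}) (C : {set cT})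
  (rho : gT -> cT) :=
  [forall x in K, forall y in K, rho (x * y)%g == (rho x * rho y)%g]
  && (rho @: K \subset C).

Definition is_graph (gT cT : finGroupType) (G : {set gT}) (C : {set cT})
  (A : {set (gT * cT)%type}) :=
  exists (K : {group gT}) (rho : gT -> cT),
    [/\ K \subset G, is_hom K C rho & A = graph K rho].

(* x lies in B(G, C_p): in the span of the graphs, i.e. supported on graphs *)
Definition in_rel_burnside (gT cT : finGroupType) (G : {set gT}) (C : {set cT})
  (x : burnside (gT * cT)%type) := forall A, x A != 0 -> is_graph G C A.

(* f : B(X) -> R_Q(X), S |-> [Q[X/S]], recorded via the character of the
   permutation module Q[X/S], namely 'Ind[X] 1_S (characters determine classes
   in R_Q(X)). *)
Definition fmap (aT : finGroupType) (X : {group aT}) (x : burnside aT) : 'CF(X) :=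
  \sum_(S : {group aT} | S \subset X) (x S)%:~R *: 'Ind[X] (1 : 'CF(S)).

(* relative Brauer relations K(G, C_p) = K(G x C_p) ∩ B(G, C_p) *)
Definition in_rel_brauer (gT cT : finGroupType) (G : {group gT}) (C : {group cT})
  (x : burnside (gT * cT)%type) :=
  [/\ in_burnside (setX G C) x, in_rel_burnside G C x & fmap (setX_group G C) x = 0].

(* index pairs (G', rho): G' <= G non-cyclic, rho : G' -> C a homomorphism;
   rho is stored as a finite function normalised to be 1 outside G', so that
   pairs correspond bijectively to (G', hom G' -> C_p). *)
Definition theta_index (gT cT : finGroupType) (G : {set gT}) (C : {set cT})
  (i : ({group gT} * {ffun gT -> cT})%type) :=
  [&& i.1 \subset G, ~~ cyclic i.1, is_hom i.1 C i.2
    & [forall x, (x \notin i.1) ==> (i.2 x == 1%g)]].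

Definition Theta (gT cT : finGroupType) (p : nat) (Lc : {group gT} -> {group gT})
  (Gp : {group gT}) (rho : gT -> cT) : burnside (gT * cT)%type :=
  bsub (graph (Lc Gp) rho)
  - \sum_(Cp : {group gT} | [&& Lc Gp \proper Cp, Cp \proper Gp & (#|Cp : Lc Gp|%g == p)%N])
      bsub (graph Cp rho)
  + bsub (graph Gp rho) *+ p.

(* Main.v *)
Require Import Defs.
From HB Require Import structures.
From mathcomp Require Import all_boot all_order all_algebra all_fingroup all_solvable all_field all_character.
From mathcomp Require Import zify ring.
Import GRing.Theory Num.Theory.
Local Open Scope ring_scope.
Set Implicit Arguments. Unset Strict Implicit. Unset Printing Implicit Defensive.
Section Graphs.
Variables gT cT : finGroupType.
Implicit Types (K L : {group gT}) (rho : gT -> cT).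

Lemma mem_graph (K : {set gT}) rho a :
  (a \in graph K rho) = (a.1 \in K) && (a.2 == rho a.1).
Proof.
apply/imsetP/andP => [[k kK ea]|[aK /eqP e]]; first by rewrite ea /=; split.
by exists a.1 => //; case: a e aK => /= ?? ->.
Qed.

Lemma card_graph (K : {set gT}) rho : #|graph K rho| = #|K|.
Proof. by rewrite /graph card_imset // => x y /(congr1 fst). Qed.

Lemma fst_graph (K : {set gT}) rho : [set a.1 | a in graph K rho] = K.
Proof.
apply/setP=> k; apply/imsetP/idP => [[a]|kK]; first by rewrite mem_graph => /andP[? _] ->.
by exists (k, rho k) => //; rewrite mem_graph eqxx andbT.
Qed.

Lemma hom1 (K : {group gT}) (C : {set cT}) rho : is_hom K C rho -> rho 1%g = 1%g.
Proof.
case/andP=> /forallP/(_ 1%g)/implyP/(_ (group1 K))/forallP/(_ 1%g)/implyP/(_ (group1 K)).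
rewrite mulg1 => /eqP e _.
by apply: (mulgI (rho 1%g)); rewrite -e mulg1.
Qed.

Lemma homM (K : {set gT}) (C : {set cT}) rho x y : is_hom K C rho -> x \in K -> y \in K ->
  rho (x * y)%g = (rho x * rho y)%g.
Proof.
by case/andP=> /forallP/(_ x)/implyP H _ xK yK; move/H: xK => /forallP/(_ y)/implyP/(_ yK)/eqP.
Qed.

Lemma homX (K : {group gT}) (C : {set cT}) rho x n : is_hom K C rho -> x \in K ->
  rho (x ^+ n)%g = (rho x ^+ n)%g.
Proof.
move=> h xK; elim: n => [|n IH]; first by rewrite !expg0 (hom1 h).
by rewrite !expgS (homM h) ?groupX // IH.
Qed.

Lemma homS (K K' : {set gT}) (C : {set cT}) rho : K \subset K' -> is_hom K' C rho -> is_hom K C rho.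
Proof.
move=> sKK' /andP[/forallP H sC]; apply/andP; split.
  apply/forallP=> x; apply/implyP=> xK; apply/forallP=> y; apply/implyP=> yK.
  have:= H x; rewrite (subsetP sKK' _ xK) /= => /forallP/(_ y).
  by rewrite (subsetP sKK' _ yK).
by apply: subset_trans sC; apply: imsetS.
Qed.

Lemma group_set_graph (K : {group gT}) (C : {set cT}) rho : is_hom K C rho -> group_set (graph K rho).
Proof.
move=> h; apply/group_setP; split.
  by rewrite mem_graph /= group1 (hom1 h) eqxx.
move=> [a b] [c d]; rewrite !mem_graph /= => /andP[aK /eqP->] /andP[cK /eqP->].
by rewrite groupM //= (homM h).
Qed.

Lemma graph_sub (K G : {set gT}) (C : {set cT}) rho : K \subset G -> is_hom K C rho ->
  graph K rho \subset setX G C.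
Proof.
move=> sKG /andP[_ sC]; apply/subsetP=> a; rewrite mem_graph inE => /andP[aK /eqP e].
rewrite (subsetP sKG _ aK) e /=; apply: (subsetP sC); exact: imset_f.
Qed.

Lemma graph_cyc (K : {group gT}) (C : {set cT}) rho k : is_hom K C rho -> (K :==: <[k]>)%g ->
  graph K rho \subset <[(k, rho k)]>%g.
Proof.
move=> h /eqP eK; apply/subsetP=> -[a1 a2]; rewrite mem_graph eK /= => /andP[/cycleP[n ->] /eqP->].
have kK : k \in K by rewrite eK cycle_id.
have -> : (k ^+ n, rho (k ^+ n))%g = ((k, rho k) ^+ n)%g.
  rewrite (homX n h kK); elim: n => [|n IH] //.
  by rewrite !expgS -IH.
exact: mem_cycle.
Qed.

End Graphs.
Lemma Zp_exp_p (p : nat) (x : 'Z_p) : prime p -> (x ^+ p)%g = 1%g.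
Proof.
move=> pr; have p1 := prime_gt1 pr.
apply: val_inj; rewrite Zp_expg /=.
move: (x : nat); rewrite Zp_cast // => m; by rewrite modnMl.
Qed.

Lemma pair_expg (aT bT : finGroupType) (y : (aT * bT)%type) n :
  (y ^+ n)%g = (y.1 ^+ n, y.2 ^+ n)%g.
Proof. elim: n => [|n IH]; first by case: y. by rewrite !expgS IH. Qed.

Section Quot.
Variable gT : finGroupType.
Local Open Scope group_scope.

Lemma quot_facts p (Gp L : {group gT}) : prime p -> abelian Gp -> L \subset Gp ->
  (Gp / L)%g \isog [set: ('Z_p * 'Z_p)%type] ->
  #|Gp| = (p * p * #|L|)%N /\ forall k, k \in Gp -> (k ^+ p)%g \in L.
Proof.
move=> pr ab sLG iso; have p1 := prime_gt1 pr.
have nLG : Gp \subset 'N(L) by apply: sub_abelian_norm.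
split.
  rewrite -(Lagrange sLG) -card_quotient // (card_isog iso) cardsT card_prod.
  by rewrite card_ord Zp_cast // mulnC.
move=> k kG; have kN : k \in 'N(L) by apply: (subsetP nLG).
apply: coset_idr; first by rewrite groupX.
case/isogP: iso => f injf _.
have uQ : coset L k \in (Gp / L)%g by apply: mem_quotient.
rewrite morphX //; apply: (injmP injf); rewrite ?groupX ?group1 // morph1 morphX //.
by rewrite pair_expg !Zp_exp_p.
Qed.

Lemma count_C p (Gp L : {group gT}) : prime p -> abelian Gp -> L \subset Gp ->
  #|Gp| = (p * p * #|L|)%N -> (forall k, k \in Gp -> (k ^+ p)%g \in L) ->
  forall k, k \in Gp ->
  (\sum_(Cp : {group gT} | [&& L \proper Cp, Cp \proper Gp & (#|Cp : L|%g == p)%N] && (k \in Cp)) 1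
    = if k \in L then p.+1 else 1)%N.
Proof.
move=> pr ab sLG cardG expL k kG.
have p1 := prime_gt1 pr.
have nLG : Gp \subset 'N(L) by apply: sub_abelian_norm.
set P := fun Cp : {group gT} => [&& L \proper Cp, Cp \proper Gp & (#|Cp : L|%g == p)%N].
have cardC Cp : P Cp -> #|Cp| = (#|L| * p)%N.
  by case/and3P=> /proper_sub sLC _ /eqP <-; rewrite Lagrange.
have L0 := cardG_gt0 L.
have one k' : k' \in Gp -> k' \notin L ->
    exists D : {group gT}, [/\ P D, k' \in D & forall Cp, P Cp -> k' \in Cp -> Cp = D].
  move=> k'G k'L; have kN : k' \in 'N(L) by apply: (subsetP nLG).
  have cN : <[k']> \subset 'N(L) by rewrite cycle_subG.
  have ord : #[coset L k'] = p.
    have : (#[coset L k'] %| p)%N.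
      by rewrite order_dvdn -morphX // /= coset_id // expL.
    case/primeP: pr => _ /[apply] /orP[|/eqP //].
    rewrite order_eq1 => /eqP /(coset_idr kN) kL'; by rewrite kL' in k'L.
  exists (L <*> <[k']>)%G.
  have DN : L <*> <[k']> \subset 'N(L) by rewrite join_subG normG cN.
  have iD : #|L <*> <[k']> : L| = p.
    by rewrite -card_quotient // quotientYidl // quotient_cycle // -orderE ord.
  have cD : #|L <*> <[k']>| = (#|L| * p)%N by rewrite -iD Lagrange // joing_subl.
  have sDG : L <*> <[k']> \subset Gp by rewrite join_subG sLG cycle_subG.
  have kD : k' \in L <*> <[k']> by rewrite (subsetP (joing_subr _ _)) // cycle_id.
  split => //.
    apply/and3P; split; last by rewrite iD.
      by rewrite properEcard joing_subl cD ltn_Pmulr.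
    rewrite properEcard sDG cD cardG /=; move: L0 p1; move: #|L| => a; nia.
  move=> Cp PC kC; apply: val_inj; apply/eqP; rewrite eq_sym eqEcard /= cardC // cD leqnn andbT.
  case/and3P: PC => /proper_sub sLC _ _.
  by rewrite join_subG sLC cycle_subG.
case: ifP => kL; last first.
  move/negbT: kL => /(one k kG) [D [PD kD uD]].
  rewrite (big_pred1 D) // => Cp /=; apply/andP/eqP => [[]|->]; first exact: uD.
  by split.
have -> : (\sum_(Cp : {group gT} | P Cp && (k \in Cp)) 1 = \sum_(Cp : {group gT} | P Cp) 1)%N.
  apply: eq_bigl => Cp; case PC: (P Cp) => //=.
  by case/and3P: PC => /proper_sub /subsetP -> .
set N := (\sum_(Cp : {group gT} | P Cp) 1)%N.
have dc : (\sum_(k' in Gp :\: L) \sum_(Cp : {group gT} | P Cp && (k' \in Cp)) 1 = N * (#|L| * p - #|L|))%N.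
  rewrite (eq_bigr (fun k' => \sum_(Cp : {group gT} | P Cp) (if k' \in Cp then 1 else 0))%N); last first.
    by move=> k' _; rewrite big_mkcondr.
  rewrite exchange_big /N big_distrl /=; apply: eq_bigr => Cp PC; rewrite mul1n.
  rewrite -big_mkcondr sum1_card -(cardC _ PC).
  have sLC : L \subset Cp by case/and3P: PC => /proper_sub.
  have sCG : Cp \subset Gp by case/and3P: PC => _ /proper_sub.
  rewrite -[in RHS](setIidPr sLC) -cardsD; apply: eq_card => x; rewrite !inE.
  by rewrite unfold_in /= !inE; case xC: (x \in Cp); rewrite ?andbF ?andbT //= (subsetP sCG x xC) andbT.
have dc2 : (\sum_(k' in Gp :\: L) \sum_(Cp : {group gT} | P Cp && (k' \in Cp)) 1 = #|Gp| - #|L|)%N.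
  rewrite (eq_bigr (fun _ => 1%N)); last first.
    move=> k'; rewrite inE => /andP[k'L k'G].
    have [D [PD kD uD]] := one k' k'G k'L.
    rewrite (big_pred1 D) // => C0 /=; apply/andP/eqP => [[]|->]; first exact: uD.
    by split.
  by rewrite sum1_card cardsD (setIidPr sLG).
move: dc; rewrite dc2 cardG => e.
move: e L0 p1; move: #|L| N => a n e a0 p1'.
have e1 : (a * p - a = a * p.-1)%N by rewrite -subn1 mulnBr muln1.
have e2 : (p * p * a - a = a * p.-1 * p.+1)%N.
  rewrite -subn1; nia.
move: e; rewrite e1 e2 => e3.
have : (n * (a * p.-1) = p.+1 * (a * p.-1))%N by nia.
by move/eqP; rewrite eqn_pmul2r ?muln_gt0 ?a0 -?subn1 ?subn_gt0 // => /eqP.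
Qed.


End Quot.
Section Marks.
Variable aT : finGroupType.
Implicit Types (X : {group aT}) (x y : burnside aT).

Definition wt X (S : {set aT}) g : algC := #|X|%:R / #|S|%:R * (g \in S)%:R.
Definition mval X x g : algC :=
  \sum_(S : {group aT} | S \subset X) (x S)%:~R * wt X S g.

Lemma fmap_val X x g : abelian X -> g \in X -> fmap X x g = mval X x g.
Proof.
move=> ab gX; rewrite /fmap sum_cfunE; apply: eq_bigr => S sSX.
rewrite cfunE cfIndE // /wt; congr (_ * _).
rewrite (eq_bigr (fun _ => (g \in S)%:R)); last first.
  move=> y yX; rewrite cfun1E.
  suff -> : (g ^ y)%g = g by [].
  by apply/conjg_fixP/commgP; apply: (centsP ab).
by rewrite sumr_const -[_ *+ #|X|]mulr_natl; ring.
Qed.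

Lemma fmap0_val X x : abelian X -> (fmap X x = 0) <-> (forall g, g \in X -> mval X x g = 0).
Proof.
move=> ab; split=> [e g gX|h]; first by rewrite -fmap_val // e cfunE.
apply/cfunP=> g; rewrite cfunE; case gX: (g \in X); first by rewrite fmap_val // h.
by rewrite cfun0 // gX.
Qed.

Lemma mvalD X x y g : mval X (x + y) g = mval X x g + mval X y g.
Proof. by rewrite /mval -big_split; apply: eq_bigr => S _; rewrite ffunE intrD mulrDl. Qed.

Lemma mval0 X g : mval X 0 g = 0.
Proof. by rewrite /mval big1 // => S _; rewrite ffunE mul0r. Qed.

Lemma mvalN X x g : mval X (- x) g = - mval X x g.
Proof. by rewrite /mval -sumrN; apply: eq_bigr => S _; rewrite ffunE intrN mulNr. Qed.

Lemma mvalMn X x n g : mval X (x *+ n) g = mval X x g *+ n.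
Proof. by rewrite /mval -sumrMnl; apply: eq_bigr => S _; rewrite ffunMnE rmorphMn mulrnAl. Qed.

Lemma mvalMz X x c g : mval X (x *~ c) g = mval X x g * c%:~R.
Proof.
rewrite /mval mulr_suml; apply: eq_bigr => S _; rewrite ffunMzE.
by rewrite mulrzz intrM mulrAC.
Qed.

Lemma mval_sum X I (r : seq I) (P : pred I) (F : I -> burnside aT) g :
  mval X (\sum_(i <- r | P i) F i) g = \sum_(i <- r | P i) mval X (F i) g.
Proof. exact: (big_morph _ (fun x y => mvalD X x y g) (mval0 X g)). Qed.

Lemma mval_bsub X (H : {set aT}) g : group_set H -> H \subset X -> mval X (bsub H) g = wt X H g.
Proof.
move=> gH sHX; rewrite /mval (bigD1 (Group gH)) //= big1 ?addr0.
  by rewrite ffunE eqxx mul1r.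
move=> S /andP[_ nSH]; rewrite ffunE.
suff -> : (gval S == H) = false by rewrite mul0r.
by apply/negbTE; apply: contra nSH => /eqP e; apply/eqP; apply: val_inj.
Qed.

End Marks.
Lemma abelianX (gT cT : finGroupType) (G : {group gT}) (C : {group cT}) :
  abelian G -> abelian C -> abelian (setX G C).
Proof.
move=> aG aC; apply/centsP => a; rewrite inE => /andP[a1 a2] b; rewrite inE => /andP[b1 b2].
have e : forall u v : (gT * cT)%type, (u * v)%g = (u.1 * v.1, u.2 * v.2)%g by [].
rewrite /commute !e; congr (_, _); [exact: (centsP aG) | exact: (centsP aC)].
Qed.

Lemma wt_graph (gT cT : finGroupType) (X : {group (gT * cT)%type}) (K : {set gT}) (rho : gT -> cT) k c :
  wt X (graph K rho) (k, c) = #|X|%:R / #|K|%:R * ((k \in K) && (c == rho k))%:R.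
Proof. rewrite /wt card_graph; congr (_ * (nat_of_bool _)%:R); exact: (mem_graph K rho (k, c)). Qed.

Lemma arith1 (F : fieldType) (N a q : F) : a != 0 -> q != 0 ->
  N / a - N / (a * q) * (q + 1) + N / (q * q * a) * q = 0.
Proof. by move=> a0 q0; field; rewrite a0 q0. Qed.
Lemma arith2 (F : fieldType) (N a q : F) : a != 0 -> q != 0 ->
  0 - N / (a * q) + N / (q * q * a) * q = 0.
Proof. by move=> a0 q0; field; rewrite a0 q0. Qed.

Section Main.
Variables (p : nat) (gT cT : finGroupType) (G : {group gT}) (C : {group cT})
  (Lc : {group gT} -> {group gT}).
Hypothesis pr : prime p.
Hypothesis abG : abelian G.
Hypothesis cardCp : #|C| = p.
Hypothesis hL : forall Gp : {group gT}, Gp \subset G -> ~~ cyclic Gp ->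
     Lc Gp \proper Gp /\ (Gp / Lc Gp)%g \isog [set: ('Z_p * 'Z_p)%type].

Let X := setX_group G C.

Lemma abX : abelian X.
Proof. apply: abelianX => //; apply: cyclic_abelian; apply: prime_cyclic; by rewrite cardCp. Qed.

Lemma theta_mval (K : {group gT}) (rho : gT -> cT) g :
  K \subset G -> ~~ cyclic K -> is_hom K C rho -> g \in X ->
  mval X (Theta p Lc K rho) g = 0.
Proof.
move=> sKG ncK hK gX.
have [pLK iso] := hL sKG ncK.
set L := Lc K.
have sLK := proper_sub pLK.
have abK := abelianS sKG abG.
have [cardK expL] := quot_facts pr abK sLK iso.
have p0 : (0 < p)%N := prime_gt0 pr.
set P := fun Cp : {group gT} => [&& L \proper Cp, Cp \proper K & (#|Cp : L|%g == p)%N].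
have gs (H : {group gT}) : H \subset K -> group_set (graph H rho).
  by move=> sHK; apply: group_set_graph; apply: homS hK.
have sX (H : {group gT}) : H \subset K -> graph H rho \subset X.
  by move=> sHK; apply: graph_sub; [apply: subset_trans sKG | apply: homS hK].
have sCK (Cp : {group gT}) : P Cp -> Cp \subset K by case/and3P=> _ /proper_sub.
rewrite /Theta !mvalD mvalN mval_sum mvalMn !mval_bsub ?gs ?sX //.
rewrite (eq_bigr (fun Cp : {group gT} => wt X (graph Cp rho) g)); last first.
  by move=> Cp PC; rewrite mval_bsub ?gs ?sX ?sCK.
have cC (Cp : {group gT}) : P Cp -> #|Cp| = (#|L| * p)%N.
  by case/and3P=> /proper_sub sLC _ /eqP <-; rewrite Lagrange.
case: g gX => k c _.
rewrite (eq_bigr (fun Cp : {group gT} => #|X|%:R / (#|L| * p)%:R * ((k \in Cp) && (c == rho k))%:R)); last first.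
  by move=> Cp PC; rewrite wt_graph (cC _ PC).
rewrite (wt_graph X (Lc K)) (wt_graph X K).
case E: (c == rho k); last first.
  by rewrite !andbF big1 ?mulr0 ?mul0rn ?subr0 ?addr0 // => Cp PC; rewrite andbF mulr0.
case kK: (k \in K); last first.
  have kL : k \in L = false by apply: contraFF kK; apply: (subsetP sLK).
  rewrite !andbT kL big1 ?mulr0 ?mul0rn ?subr0 ?addr0 // => Cp PC.
  suff -> : k \in Cp = false by rewrite andbT mulr0.
  by apply: contraFF kK; apply: (subsetP (sCK _ PC)).
rewrite (eq_bigr (fun Cp : {group gT} => #|X|%:R / (#|L| * p)%:R * (if k \in Cp then 1 else 0))); last first.
  by move=> Cp PC; rewrite andbT; case: (k \in Cp).
rewrite -mulr_sumr -big_mkcondr /= sumr_const.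
have := count_C pr abK sLK cardK expL kK; rewrite -/P -/L => cnt.
rewrite -sum1_card cnt andbT mulr1 cardK.
have a0 : (#|L|%:R : algC) != 0 by rewrite pnatr_eq0 -lt0n cardG_gt0.
have pp0 : (p%:R : algC) != 0 by rewrite pnatr_eq0 -lt0n.
set N := (#|setX G C|%:R : algC).
rewrite -[_ *+ p]mulr_natr.
case: (k \in L); rewrite /= !natrM ?mulr1 ?mulr0.
  by rewrite -natr1; apply: arith1.
by apply: arith2.
Qed.

End Main.
Section Supp.
Variable aT : finGroupType.
Implicit Types (x y : burnside aT).
Definition supp_in (Q : {set aT} -> Prop) x := forall A, x A != 0 -> Q A.

Lemma supp0 Q : supp_in Q 0.
Proof. by move=> A; rewrite ffunE eqxx. Qed.

Lemma suppD Q x y : supp_in Q x -> supp_in Q y -> supp_in Q (x + y).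
Proof.
move=> hx hy A; rewrite ffunE; case: (eqVneq (x A) 0) => [->|/hx //].
by rewrite add0r => /hy.
Qed.

Lemma suppN Q x : supp_in Q x -> supp_in Q (- x).
Proof. by move=> hx A; rewrite ffunE oppr_eq0 => /hx. Qed.

Lemma suppMz Q x c : supp_in Q x -> supp_in Q (x *~ c).
Proof.
move=> hx A; rewrite ffunMzE; case: (eqVneq (x A) 0) => [->|/hx //].
by rewrite mul0rz eqxx.
Qed.

Lemma suppMn Q x n : supp_in Q x -> supp_in Q (x *+ n).
Proof. by move=> hx; rewrite -mulrz_nat; apply: suppMz. Qed.

Lemma supp_sum Q I (r : seq I) (P : pred I) (F : I -> burnside aT) :
  (forall i, P i -> supp_in Q (F i)) -> supp_in Q (\sum_(i <- r | P i) F i).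
Proof.
move=> h; apply: (big_ind (supp_in Q)); [exact: supp0 | exact: suppD | exact: h].
Qed.

Lemma supp_bsub (Q : {set aT} -> Prop) (H : {set aT}) : Q H -> supp_in Q (bsub H).
Proof. by move=> hQ A; rewrite ffunE; case: (eqVneq A H) => [->|]. Qed.

End Supp.

Section Rel.
Variables (gT cT : finGroupType) (G : {group gT}) (C : {group cT}).
Hypothesis abX : abelian (setX G C).

Lemma relE x : in_rel_brauer G C x <->
  [/\ supp_in (fun A => group_set A && (A \subset setX G C)) x,
      supp_in (is_graph G C) x &
      forall g, g \in setX G C -> mval (setX_group G C) x g = 0].
Proof.
have h := fmap0_val x abX.
by rewrite /in_rel_brauer; split; case=> a b c; split => //; apply/h.
Qed.

Lemma rel0 : in_rel_brauer G C 0.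
Proof. apply/relE; split; [exact: supp0 | exact: supp0 | by move=> g _; rewrite mval0]. Qed.

Lemma relD x y : in_rel_brauer G C x -> in_rel_brauer G C y -> in_rel_brauer G C (x + y).
Proof.
move=> /relE[a b c] /relE[a' b' c']; apply/relE; split; try exact: suppD.
by move=> g gX; rewrite mvalD c ?c' ?addr0.
Qed.

Lemma relN x : in_rel_brauer G C x -> in_rel_brauer G C (- x).
Proof.
move=> /relE[a b c]; apply/relE; split; try exact: suppN.
by move=> g gX; rewrite mvalN c ?oppr0.
Qed.

Lemma relMz x k : in_rel_brauer G C x -> in_rel_brauer G C (x *~ k).
Proof.
move=> /relE[a b c]; apply/relE; split; try exact: suppMz.
by move=> g gX; rewrite mvalMz c ?mul0r.
Qed.

Lemma relMn x n : in_rel_brauer G C x -> in_rel_brauer G C (x *+ n).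
Proof. by move=> h; rewrite -mulrz_nat; apply: relMz. Qed.

Lemma rel_sum I (r : seq I) (P : pred I) (F : I -> burnside (gT * cT)%type) :
  (forall i, P i -> in_rel_brauer G C (F i)) -> in_rel_brauer G C (\sum_(i <- r | P i) F i).
Proof.
move=> h; apply: (big_ind (in_rel_brauer G C)); [exact: rel0 | exact: relD | exact: h].
Qed.

End Rel.
Section Final.
Variables (p : nat) (gT cT : finGroupType) (G : {group gT}) (C : {group cT})
  (Lc : {group gT} -> {group gT}).
Hypothesis pr : prime p.
Hypothesis abG : abelian G.
Hypothesis cardCp : #|C| = p.
Hypothesis hL : forall Gp : {group gT}, Gp \subset G -> ~~ cyclic Gp ->
     Lc Gp \proper Gp /\ (Gp / Lc Gp)%g \isog [set: ('Z_p * 'Z_p)%type].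

Let X := setX_group G C.
Lemma abX' : abelian (setX G C).
Proof. apply: abelianX => //; apply: cyclic_abelian; apply: prime_cyclic; by rewrite cardCp. Qed.
Let T := ({group gT} * {ffun gT -> cT})%type.

Lemma graph_inj (i j : T) : theta_index G C i -> theta_index G C j ->
  graph i.1 i.2 = graph j.1 j.2 -> i = j.
Proof.
case: i j => [K r] [K' r'] /and4P[_ _ _ /forallP hi] /and4P[_ _ _ /forallP hj] /= e.
have eK : K = K' by apply: val_inj; rewrite /= -(fst_graph K r) -(fst_graph K' r') e.
subst K'; congr (_, _); apply/ffunP => x.
case xK: (x \in K); last first.
  by move: (hi x) (hj x); rewrite xK /= => /eqP -> /eqP ->.
have : (x, r x) \in graph K r' by rewrite -e mem_graph xK eqxx.
by rewrite mem_graph /= => /andP[_ /eqP].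
Qed.

Lemma theta_at (j : T) (K : {set gT}) (r : gT -> cT) :
  theta_index G C j -> (#|j.1| <= #|K|)%N ->
  Theta p Lc j.1 j.2 (graph K r) = ((graph K r == graph j.1 j.2) : nat)%:Z *+ p.
Proof.
case/and4P=> sjG ncj _ _ le.
have [pLj _] := hL sjG ncj.
rewrite /Theta !ffunE sum_ffunE ffunMnE !ffunE big1 ?subr0.
  suff -> : (graph K r == graph (Lc j.1) j.2) = false by rewrite add0r.
  apply/negbTE/eqP => e0; have := congr1 (fun A : {set (gT * cT)%type} => #|A|) e0.
  rewrite /= !card_graph => e.
  by move: (proper_card pLj); rewrite -e ltnNge le.
move=> Cp /and3P[_ pCj _]; rewrite ffunE.
suff -> : (graph K r == graph Cp j.2) = false by [].
apply/negbTE/eqP => e0; have := congr1 (fun A : {set (gT * cT)%type} => #|A|) e0.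
  rewrite /= !card_graph => e.
by move: (proper_card pCj); rewrite -e ltnNge le.
Qed.

Lemma theta_rel (i : T) : theta_index G C i -> in_rel_brauer G C (Theta p Lc i.1 i.2).
Proof.
case/and4P=> sKG ncK hK _.
set K := i.1; set r := i.2.
have [pLK _] := hL sKG ncK.
have sX (H : {group gT}) : H \subset K ->
    (group_set (graph H r) && (graph H r \subset setX G C)) /\ is_graph G C (graph H r).
  move=> sHK; have hH := homS sHK hK; split.
    by rewrite (group_set_graph hH) graph_sub // (subset_trans sHK sKG).
  by exists H, r; split => //; apply: subset_trans sKG.
apply/(relE abX'); split.
- rewrite /Theta; apply: suppD; last by apply: suppMn; apply: supp_bsub; case: (sX K).
  apply: suppD; first by apply: supp_bsub; case: (sX _ (proper_sub pLK)).
  apply: suppN; apply: supp_sum => Cp /and3P[_ /proper_sub sCK _].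
  by apply: supp_bsub; case: (sX _ sCK).
- rewrite /Theta; apply: suppD; last by apply: suppMn; apply: supp_bsub; case: (sX K).
  apply: suppD; first by apply: supp_bsub; case: (sX _ (proper_sub pLK)).
  apply: suppN; apply: supp_sum => Cp /and3P[_ /proper_sub sCK _].
  by apply: supp_bsub; case: (sX _ sCK).
- by move=> g gX; apply: theta_mval.
Qed.

Lemma indep (c : T -> int) :
  \sum_(i | theta_index G C i) Theta p Lc i.1 i.2 *~ c i = 0 ->
  forall i, theta_index G C i -> c i = 0.
Proof.
move=> e i0 ti0; apply/eqP; apply: contraT => nz0.
pose P := [pred i : T | theta_index G C i && (c i != 0)].
have Pi0 : P i0 by rewrite inE ti0 nz0.
case: (@arg_maxnP _ i0 P (fun i : T => #|i.1|) Pi0) => m /andP[tm nzm] maxm.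
have := congr1 (fun f : burnside (gT * cT)%type => f (graph m.1 m.2)) e.
rewrite /= sum_ffunE ffunE (bigD1 m) //= big1.
  rewrite addr0 ffunMzE theta_at // eqxx mulrzz => /eqP; rewrite mulf_eq0 (negbTE nzm) orbF.
  by rewrite pmulrn intz /= (eqz_nat p 0) (gtn_eqF (prime_gt0 pr)).
move=> j /andP[tj njm]; rewrite ffunMzE.
case: (eqVneq (c j) 0) => [->|nzj]; first by rewrite mulr0z.
rewrite theta_at //; last by apply: maxm; rewrite inE tj nzj.
suff -> : (graph m.1 m.2 == graph j.1 j.2) = false by rewrite mul0rn mul0rz.
apply/negbTE/eqP => eg; move/eqP: njm; apply; symmetry; exact: graph_inj eg.
Qed.

Lemma cyc_zero (y : burnside (gT * cT)%type) : in_rel_brauer G C y ->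
  (forall A, y A != 0 -> cyclic [set a.1 | a in A]) -> y = 0.
Proof.
move=> /(relE abX') [sb sg fm] hc.
apply/ffunP => A0; rewrite ffunE; apply/eqP; apply: contraT => nz0.
pose P := [pred A : {set (gT * cT)%type} | y A != 0].
have PA0 : P A0 by rewrite inE.
case: (@arg_maxnP _ A0 P (fun A => #|A|) PA0) => A PA maxA.
have /andP[gsA sAX] := sb A PA.
have [K [r [sKG hK eA]]] := sg A PA.
have : cyclic K by have := hc A PA; rewrite eA fst_graph.
case/cyclicP => k eK.
pose g : (gT * cT)%type := (k, r k).
have gA : g \in A by rewrite eA mem_graph /= eK cycle_id eqxx.
have sAg : A \subset <[g]>%g by rewrite eA; apply: graph_cyc hK _; rewrite eK.
have gX : g \in setX G C by apply: (subsetP sAX).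
have := fm g gX; rewrite /mval (bigD1 (Group gsA)) //= big1.
  rewrite addr0 /wt gA mulr1 => /eqP; rewrite !mulf_eq0 intr_eq0 (negbTE PA) /=.
  rewrite invr_eq0 !pnatr_eq0.
  have n1 : #|setX G C| != 0%N by rewrite -lt0n; apply/card_gt0P; exists g.
  have n2 : #|A| != 0%N by rewrite -lt0n; apply/card_gt0P; exists g.
  by move/orP=> [/eqP e|/eqP e]; [move: n1 | move: n2]; rewrite e.
move=> S /andP[sSX nSA].
case: (eqVneq (y S) 0) => [->|nzS]; first by rewrite mul0r.
rewrite /wt; case gS: (g \in S); last by rewrite !mulr0.
exfalso; move/eqP: nSA; apply; apply: val_inj => /=.
have sAS : A \subset S by apply: subset_trans sAg _; rewrite cycle_subG.
symmetry; apply/eqP; rewrite eqEcard; apply/andP; split; first exact: sAS.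
by apply: (maxA (gval S)); rewrite inE.
Qed.

Lemma hom_eq_in (K : {group gT}) (r r' : gT -> cT) : {in K, r =1 r'} ->
  is_hom K C r -> is_hom K C r'.
Proof.
move=> e /andP[/forallP h sC]; apply/andP; split; last by rewrite -(eq_in_imset e).
apply/forallP=> x; apply/implyP=> xK; apply/forallP=> y; apply/implyP=> yK.
have := h x; rewrite xK => /forallP/(_ y); rewrite yK /=.
by rewrite -!e ?groupM.
Qed.

Lemma normalize (K : {group gT}) (r : gT -> cT) : K \subset G -> ~~ cyclic K ->
  is_hom K C r -> exists i : T, [/\ theta_index G C i, graph i.1 i.2 = graph K r & i.1 = K].
Proof.
move=> sKG ncK hK.
pose r' := [ffun x => if x \in K then r x else 1%g].
have e : {in K, r =1 r'} by move=> x xK; rewrite ffunE xK.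
exists (K, r'); split => //=.
  rewrite /theta_index /= sKG ncK (hom_eq_in e hK) /=.
  by apply/forallP => x; apply/implyP => xK; rewrite ffunE (negbTE xK).
by rewrite /graph (eq_in_imset (g := fun k => (k, r k))) // => x xK /=; rewrite -e.
Qed.

Lemma span n (y : burnside (gT * cT)%type) : in_rel_brauer G C y ->
  (forall A, y A != 0 -> ~~ cyclic [set a.1 | a in A] -> (#|A| <= n)%N) ->
  exists (k : nat) (c : T -> int),
    y *+ (p ^ k) = \sum_(i | theta_index G C i) Theta p Lc i.1 i.2 *~ c i.
Proof.
elim: n y => [|n IH] y ry hy.
  exists 0%N, (fun _ => 0); rewrite big1 ?expn0 ?mulr1n => [|i _]; last exact: mulr0z.
  apply: cyc_zero => // A nzA; apply: contraT => ncA.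
  have := hy A nzA ncA; case: ry => /(_ A nzA) /andP[/group_setP[A1 _] _] _ _.
  by rewrite leqn0 => /eqP/cards0_eq eA; rewrite eA inE in A1.
pose S := \sum_(i | theta_index G C i && (#|i.1| == n.+1)%N)
            Theta p Lc i.1 i.2 *~ y (graph i.1 i.2).
pose z := y *+ p - S.
have rz : in_rel_brauer G C z.
  apply: (relD abX'); first exact: (relMn abX').
  apply: (relN abX'); apply: (rel_sum abX') => i /andP[ti _]; apply: (relMz abX'); exact: theta_rel.
have hz A : z A != 0 -> ~~ cyclic [set a.1 | a in A] -> (#|A| <= n)%N.
  move=> nzA ncA; rewrite leqNgt; apply/negP => ltA.
  have [_ gr _] := rz.
  have [K [r [sKG hK eA]]] := gr A nzA.
  have ncK : ~~ cyclic K by move: ncA; rewrite eA fst_graph.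
  move: nzA; rewrite /z /S ffunE ffunMnE ffunE sum_ffunE.
  have cA : #|A| = #|K| by rewrite eA card_graph.
  rewrite (eq_bigr (fun i : T => ((graph K r == graph i.1 i.2) : nat)%:Z *+ p *~ y (graph i.1 i.2))); last first.
    move=> i /andP[ti /eqP ci]; rewrite ffunMzE eA theta_at // ci -cA //.
  case: (ltngtP n.+1 #|A|) => [gtA|ltA'|eqA].
  - have -> : y A = 0.
      apply/eqP; apply: contraT => nzy; have := hy A nzy ncA; by rewrite leqNgt gtA.
    rewrite mul0rn big1 ?subr0 ?eqxx // => i /andP[_ /eqP ci].
    suff -> : (graph K r == graph i.1 i.2) = false by rewrite mul0rn mul0rz.
    apply/negbTE/eqP => e0; have := congr1 (fun A : {set (gT * cT)%type} => #|A|) e0.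
    by rewrite /= !card_graph ci -cA => e1; move: gtA; rewrite e1 ltnn.
  - by move: ltA'; rewrite ltnS leqNgt ltA.
  - have [i0 [ti0 gi0 ei0]] := normalize sKG ncK hK.
    rewrite (eq_bigr (fun i : T => if i == i0 then y A *+ p else 0)); last first.
      move=> i /andP[ti _]; case: eqP => [e|ne].
        have ei : i = i0 by apply: graph_inj => //; rewrite -e gi0.
        rewrite ei eqxx -(congr1 y (etrans gi0 (esym eA))).
        by rewrite mulrzz mulrnAl mul1r.
      case: (eqVneq i i0) => [ei|_]; last by rewrite mul0rn mul0rz.
      by exfalso; apply: ne; rewrite ei gi0.
    rewrite -big_mkcondr /= (big_pred1 i0) ?subrr ?eqxx // => i /=.
    apply/andP/eqP => [[_ /eqP] //|->]; split => //.
    by rewrite ti0 ei0 eqA; apply/eqP; exact: (esym cA).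
have [k [c ec]] := IH z rz hz.
exists k.+1, (fun i => c i + (if (#|i.1| == n.+1)%N then y (graph i.1 i.2) *+ p ^ k else 0)).
rewrite expnS mulrnA.
have -> : y *+ p = z + S by rewrite /z subrK.
rewrite mulrnDl ec.
rewrite [RHS](eq_bigr (fun i : T => Theta p Lc i.1 i.2 *~ c i + Theta p Lc i.1 i.2 *~
   (if (#|i.1| == n.+1)%N then y (graph i.1 i.2) *+ p ^ k else 0))); last first.
  by move=> i _; rewrite mulrzDr.
rewrite big_split /=; congr (_ + _).
rewrite /S -sumrMnl big_mkcondr /=; apply: eq_bigr => i _.
case: ifP => _; last by rewrite mulr0z.
by rewrite -mulrz_nat -mulrzA mulr_natr.
Qed.

End Final.

Unset Implicit Arguments.

Theorem theorem5p5 (p : nat) (gT cT : finGroupType) (G : {group gT}) (C : {group cT})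
  (Lc : {group gT} -> {group gT}) :
  prime p -> abelian G -> (p.-group G)%g -> #|C| = p ->
  (forall Gp : {group gT}, Gp \subset G -> ~~ cyclic Gp ->
     Lc Gp \proper Gp /\ (Gp / Lc Gp)%g \isog [set: ('Z_p * 'Z_p)%type]) ->
  [/\ (* each Theta_{G',rho} is a relative Brauer relation *)
      (forall i, theta_index G C i -> in_rel_brauer G C (Theta p Lc i.1 i.2)),
      (* the Theta's are linearly independent (over Z, equivalently over Z[1/p]) *)
      (forall c : ({group gT} * {ffun gT -> cT})%type -> int,
         \sum_(i | theta_index G C i) Theta p Lc i.1 i.2 *~ c i = 0 ->
         forall i, theta_index G C i -> c i = 0)
    & (* they span K(G,C_p)[1/p]: every relation times a power of p is a Z-combination *)
      (forall x, in_rel_brauer G C x ->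
         exists (k : nat) (c : ({group gT} * {ffun gT -> cT})%type -> int),
           x *+ (p ^ k) = \sum_(i | theta_index G C i) Theta p Lc i.1 i.2 *~ c i)].
Proof.
move=> pr abG _ cC hL; split.
- by move=> i ti; apply: theta_rel.
- by move=> c e i ti; apply: indep e i ti.
- move=> x rx; apply: (span pr abG cC hL (n := #|[set: (gT * cT)%type]|)) => //.
  by move=> A _ _; apply: subset_leq_card; apply: subsetT.
Qed.
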